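(* For every $\mathcal{ALC}$-formula $\varphi$, $\varphi\equiv\varphi^\dagger$, where $$\varphi^\dagger=\bigvee_{(T,o,f)\in\mathrm{QM}(\varphi)}\Big(\bigwedge_{\alpha\in f}\alpha\ \wedge\bigwedge_{\neg\alpha\in f}\neg\alpha\Big),$$ with $\alpha$ ranging over atomic formulae (of the form $(C=\top)$, $C(a)$, $r(a,b)$).
   Context: $\mathcal{ALC}$ concepts: $C::=A\mid\neg C\mid(C\sqcap C)\mid\exists r.C$ ($A$ concept name, $r$ role name). $\mathcal{ALC}$-formulae: $\phi::=\alpha\mid\neg\phi\mid(\phi\wedge\phi)$, atomic $\alpha::=C(a)\mid r(a,b)\mid(C=\top)$ ($a,b$ individual names); $\neg\neg\psi$ is identified with $\psi$; an empty disjunction is $\bot$. Interpretations $I=(\Delta^I,\cdot^I)$ with countable nonempty domain and standard semantics ($I\models(C=\top)$ iff $C^I=\Delta^I$, etc.); $\varphi\equiv\psi$ means both have the same models. $\mathrm{Sub}(\alpha)=\mathrm{Sub}(\neg\alpha)=\{\alpha,\neg\alpha\}$ for atomic $\alpha$; $\mathrm{Sub}(\psi\wedge\psi')=\mathrm{Sub}(\neg(\psi\wedge\psi'))=\{\psi\wedge\psi',\neg(\psi\wedge\psi')\}\cup\mathrm{Sub}(\psi)\cup\mathrm{Sub}(\psi')$. $\mathrm{con}(\varphi)$ is the smallest set of concepts containing $C$ whenever $(C=\top)\in\mathrm{Sub}(\varphi)$ or $C(a)\in\mathrm{Sub}(\varphi)$, containing $C,D$ when it contains $C\sqcap D$, containing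 $C$ when it contains $\exists r.C$, and closed under single negation. $\mathrm{ind}(\varphi)$: individual names in $\varphi$. Concept type for $\varphi$: $c\subseteq\mathrm{con}(\varphi)$ with $D\in c$ iff $\neg D\notin c$ ($D\in\mathrm{con}(\varphi)$) and $D\sqcap E\in c$ iff $\{D,E\}\subseteq c$ ($D\sqcap E\in\mathrm{con}(\varphi)$). Formula type for $\varphi$: $f\subseteq\mathrm{Sub}(\varphi)$ with $\psi\in f$ iff $\neg\psi\notin f$ ($\psi\in\mathrm{Sub}(\varphi)$) and $\psi\wedge\psi'\in f$ iff $\{\psi,\psi'\}\subseteq f$. Model candidate: $(T,o,f)$, $T$ a set of concept types, $o:\mathrm{ind}(\varphi)\to T$, $f$ a formula type, with $\varphi\in f$; $C(a)\in f\Rightarrow C\in o(a)$; $r(a,b)\in f\Rightarrow\{\neg C\mid\neg\exists r.C\in o(a)\}\subseteq o(b)$. Quasimodel for $\varphi$: a model candidate such that for every $c\in T$ and $\exists r.D\in c$ some $c'\in T$ contains $\{D\}\cup\{\neg E\mid\neg\exists r.E\in c\}$; for every $c\in T$ and concept $C$, $\neg C\in c$ implies $(C=\top)\notin f$; for every concept $C$, $\neg(C=\top)\in f$ implies some $c\in T$ has $C\notin c$; $T\neq\emptyset$. $\mathrm{QM}(\varphi)$ is the set of all quasimodels for $\varphi$. *)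

(* Defs.v *)
From Stdlib Require Import List Bool Classical ClassicalEpsilon.
Import ListNotations.

Inductive concept : Type :=
| CName : nat -> concept
| CNot  : concept -> concept
| CAnd  : concept -> concept -> concept
| CEx   : nat -> concept -> concept.

Inductive formula : Type :=
| FCA  : concept -> nat -> formula          (* C(a) *)
| FRole : nat -> nat -> nat -> formula      (* r(a,b) *)
| FTop : concept -> formula                 (* (C = T) *)
| FNot : formula -> formula
| FAnd : formula -> formula -> formula.

Record interp : Type := {
  dom : Type;
  dom_countable : exists g : dom -> nat, forall x y, g x = g y -> x = y;
  dom_pt : dom;
  cI : nat -> dom -> Prop;
  rI : nat -> dom -> dom -> Prop;
  iI : nat -> dom
}.

Fixpoint csat (I : interp) (C : concept) (x : dom I) : Prop :=
  match C with
  | CName A => cI I A x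
  | CNot D => ~ csat I D x
  | CAnd D E => csat I D x /\ csat I E x
  | CEx r D => exists y, rI I r x y /\ csat I D y
  end.

Fixpoint fsat (I : interp) (phi : formula) : Prop :=
  match phi with
  | FCA C a => csat I C (iI I a)
  | FRole r a b => rI I r (iI I a) (iI I b)
  | FTop C => forall x, csat I C x
  | FNot psi => ~ fsat I psi
  | FAnd p q => fsat I p /\ fsat I q
  end.

Definition fequiv (phi psi : formula) : Prop := forall I, fsat I phi <-> fsat I psi.

Definition cneg (C : concept) : concept :=
  match C with CNot D => D | _ => CNot C end.
Definition fneg (p : formula) : formula :=
  match p with FNot q => q | _ => FNot p end.

(* normal form: all double negations removed (representatives of the
   equivalence classes modulo ~~psi = psi) *)
Fixpoint cnf (C : concept) : concept :=
  match C with
  | CName A => CName A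
  | CNot D => cneg (cnf D)
  | CAnd D E => CAnd (cnf D) (cnf E)
  | CEx r D => CEx r (cnf D)
  end.
Fixpoint fnf (p : formula) : formula :=
  match p with
  | FCA C a => FCA (cnf C) a
  | FRole r a b => FRole r a b
  | FTop C => FTop (cnf C)
  | FNot q => fneg (fnf q)
  | FAnd q q' => FAnd (fnf q) (fnf q')
  end.

Fixpoint sub (p : formula) : list formula :=
  match p with
  | FNot q => sub q
  | FAnd q q' => [p; FNot p] ++ sub q ++ sub q'
  | _ => [p; FNot p]
  end.
Definition Sub (phi : formula) : list formula := sub (fnf phi).

Fixpoint ind (p : formula) : list nat :=
  match p with
  | FCA _ a => [a]
  | FRole _ a b => [a; b]
  | FTop _ => []
  | FNot q => ind q
  | FAnd q q' => ind q ++ ind q'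
  end.

Inductive con (phi : formula) : concept -> Prop :=
| con_top C : In (FTop C) (Sub phi) -> con phi C
| con_ca C a : In (FCA C a) (Sub phi) -> con phi C
| con_andl C D : con phi (CAnd C D) -> con phi C
| con_andr C D : con phi (CAnd C D) -> con phi D
| con_ex r C : con phi (CEx r C) -> con phi C
| con_neg C : con phi C -> con phi (cneg C).

Definition cset := concept -> Prop.
Definition fset := formula -> Prop.

Definition concept_type (phi : formula) (c : cset) : Prop :=
  (forall D, c D -> con phi D) /\
  (forall D, con phi D -> (c D <-> ~ c (cneg D))) /\
  (forall D E, con phi (CAnd D E) -> (c (CAnd D E) <-> (c D /\ c E))).

Definition formula_type (phi : formula) (f : fset) : Prop :=
  (forall p, f p -> In p (Sub phi)) /\
  (forall p, In p (Sub phi) -> (f p <-> ~ f (fneg p))) /\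
  (forall p q, In (FAnd p q) (Sub phi) -> (f (FAnd p q) <-> (f p /\ f q))).

(* T : set of concept types, o : ind(phi) -> T (only its values on ind(phi)
   matter), f : formula type *)
Definition model_candidate (phi : formula) (T : cset -> Prop) (o : nat -> cset)
    (f : fset) : Prop :=
  (forall c, T c -> concept_type phi c) /\
  (forall a, In a (ind phi) -> T (o a)) /\
  formula_type phi f /\
  f (fnf phi) /\
  (forall C a, f (FCA C a) -> o a C) /\
  (forall r a b, f (FRole r a b) ->
     forall C, o a (CNot (CEx r C)) -> o b (cneg C)).

Definition quasimodel (phi : formula) (T : cset -> Prop) (o : nat -> cset)
    (f : fset) : Prop :=
  model_candidate phi T o f /\
  (forall c r D, T c -> c (CEx r D) ->
     exists c', T c' /\ c' D /\ (forall E, c (CNot (CEx r E)) -> c' (cneg E))) /\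
  (forall c C, T c -> c (cneg C) -> ~ f (FTop C)) /\
  (forall C, f (FNot (FTop C)) -> exists c, T c /\ ~ c C) /\
  (exists c, T c).

Definition fbot : formula := FAnd (FTop (CName 0)) (FNot (FTop (CName 0))).
Definition ftop : formula := FNot fbot.
Definition for_ (p q : formula) : formula := FNot (FAnd (FNot p) (FNot q)).

Fixpoint bigconj (l : list formula) : formula :=
  match l with
  | [] => ftop
  | [x] => x
  | x :: xs => FAnd x (bigconj xs)
  end.
Fixpoint bigdisj (l : list formula) : formula :=
  match l with
  | [] => fbot
  | [x] => x
  | x :: xs => for_ x (bigdisj xs)
  end.

Definition is_atomic (p : formula) : bool :=
  match p with FCA _ _ | FRole _ _ _ | FTop _ => true | _ => false end.
Definition is_literal (p : formula) : bool :=
  match p with FNot q => is_atomic q | q => is_atomic q end.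

Fixpoint subseqs {A : Type} (l : list A) : list (list A) :=
  match l with
  | [] => [[]]
  | x :: xs => let r := subseqs xs in map (cons x) r ++ r
  end.

Fixpoint pfilter {A : Type} (P : A -> Prop) (l : list A) : list A :=
  match l with
  | [] => []
  | x :: xs => if excluded_middle_informative (P x) then x :: pfilter P xs
               else pfilter P xs
  end.

(* The formula types f occurring in some quasimodel (T,o,f) of phi, each
   represented by a sublist of Sub(phi) with the same elements. *)
Definition qm_ftypes (phi : formula) : list (list formula) :=
  pfilter (fun l => exists T o, quasimodel phi T o (fun p => In p l))
          (subseqs (Sub phi)).

Definition disjunct (l : list formula) : formula := bigconj (filter is_literal l).

Definition dagger (phi : formula) : formula := bigdisj (map disjunct (qm_ftypes phi)).

(* Main.v *)
Require Import Defs.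
From Stdlib Require Import List Bool Classical ClassicalEpsilon FunctionalExtensionality PropExtensionality.
Import ListNotations.

Lemma csat_cneg I C x : csat I (cneg C) x <-> ~ csat I C x.
Proof. destruct C; simpl; try tauto. Qed.

Lemma csat_cnf I C : forall x, csat I (cnf C) x <-> csat I C x.
Proof.
  induction C; intro x; simpl; try tauto.
  - rewrite csat_cneg. rewrite IHC. tauto.
  - rewrite IHC1, IHC2. tauto.
  - split; intros [y [H1 H2]]; exists y; split; auto; apply IHC; auto.
Qed.

Lemma fsat_fneg I p : fsat I (fneg p) <-> ~ fsat I p.
Proof. destruct p; simpl; try tauto. Qed.

Lemma fsat_fnf I p : fsat I (fnf p) <-> fsat I p.
Proof.
  induction p; simpl.
  - apply csat_cnf.
  - tauto.
  - split; intros H x; apply csat_cnf; auto.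
  - rewrite fsat_fneg, IHp. tauto.
  - rewrite IHp1, IHp2. tauto.
Qed.

Lemma fsat_ftop I : fsat I ftop.
Proof. simpl. tauto. Qed.

Lemma fsat_fbot I : ~ fsat I fbot.
Proof. simpl. tauto. Qed.

Lemma fsat_bigconj I l : fsat I (bigconj l) <-> (forall p, In p l -> fsat I p).
Proof.
  induction l as [|a l IH].
  - simpl. split; intros; [contradiction| apply fsat_ftop].
  - destruct l as [|b l'].
    + simpl. split; [intros H p [<-|[]]; exact H| intros H; apply H; auto].
    + change (fsat I (FAnd a (bigconj (b :: l'))) <-> (forall p, In p (a :: b :: l') -> fsat I p)).
      simpl fsat at 1. rewrite IH. split.
      * intros [Ha Hl] p [<-|Hp]; auto.
      * intros H; split; [apply H; left; auto| intros p Hp; apply H; right; auto].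
Qed.

Lemma fsat_bigdisj I l : fsat I (bigdisj l) <-> (exists p, In p l /\ fsat I p).
Proof.
  induction l as [|a l IH].
  - simpl. split; [intro H; exfalso; tauto| intros [p [[] _]]].
  - destruct l as [|b l'].
    + simpl. split; [intros H; exists a; auto| intros [p [[<-|[]] H]]; exact H].
    + change (fsat I (for_ a (bigdisj (b :: l'))) <-> (exists p, In p (a :: b :: l') /\ fsat I p)).
      unfold for_. simpl fsat at 1. rewrite IH. split.
      * intro H. apply NNPP. intro Hn. apply H. split.
        -- intro Ha. apply Hn. exists a. split; [left; auto| auto].
        -- intros [p [Hp Hs]]. apply Hn. exists p. split; [right; auto| auto].
      * intros [p [[<-|Hp] Hs]] [H1 H2]; [tauto|]. apply H2. exists p; auto.
Qed.

Lemma In_pfilter {A} (P : A -> Prop) l x : In x (pfilter P l) <-> In x l /\ P x.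
Proof.
  induction l as [|a l IH]; simpl.
  - tauto.
  - destruct (excluded_middle_informative (P a)) as [Ha|Ha]; simpl; rewrite IH;
      split; intuition; subst; tauto.
Qed.

Lemma pfilter_subseqs {A} (P : A -> Prop) l : In (pfilter P l) (subseqs l).
Proof.
  induction l as [|a l IH]; simpl.
  - left; auto.
  - destruct (excluded_middle_informative (P a)); apply in_or_app;
      [left; apply in_map; auto| right; auto].
Qed.

Definition notnot (q : formula) : Prop := match q with FNot _ => False | _ => True end.

Fixpoint nodn (p : formula) : Prop :=
  match p with
  | FNot q => notnot q /\ nodn q
  | FAnd q q' => nodn q /\ nodn q'
  | _ => True
  end.

Lemma nodn_fneg p : nodn p -> nodn (fneg p).
Proof. destruct p; simpl; tauto. Qed.

Lemma nodn_fnf p : nodn (fnf p).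
Proof. induction p; simpl; auto. apply nodn_fneg; auto. Qed.

Lemma fneg_nn q : notnot q -> fneg q = FNot q.
Proof. destruct q; simpl; tauto. Qed.

Lemma sub_fneg q : forall p, In p (sub q) -> In (fneg p) (sub q).
Proof.
  induction q; simpl; intros p Hp;
    try (destruct Hp as [<-|[<-|[]]]; simpl; auto; fail).
  - apply IHq; auto.
  - destruct Hp as [<-|[<-|Hp]]; simpl; auto.
    right; right. apply in_app_or in Hp. apply in_or_app.
    destruct Hp; [left; apply IHq1| right; apply IHq2]; auto.
Qed.

Lemma sub_incl q : forall x, In x (sub q) -> incl (sub x) (sub q).
Proof.
  induction q; simpl; intros x Hx;
    try (destruct Hx as [<-|[<-|[]]]; simpl; apply incl_refl).
  - apply IHq; auto.
  - destruct Hx as [<-|[<-|Hx]]; simpl; try apply incl_refl.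
    apply in_app_or in Hx. intros y Hy. right; right. apply in_or_app.
    destruct Hx; [left; eapply IHq1| right; eapply IHq2]; eauto.
Qed.

Lemma nodn_sub q : forall x, In x (sub q) -> nodn q -> nodn x.
Proof.
  induction q; simpl; intros x Hx Hn;
    try (destruct Hx as [<-|[<-|[]]]; simpl; auto; fail).
  - apply IHq; tauto.
  - destruct Hx as [<-|[<-|Hx]]; simpl; auto.
    apply in_app_or in Hx. destruct Hx; [apply IHq1| apply IHq2]; tauto.
Qed.

Lemma nodn_in p : nodn p -> In p (sub p).
Proof.
  destruct p; simpl; auto. intros [Hq _]. destruct p; simpl in *; tauto.
Qed.

Lemma sub_closed_and r p q : nodn r -> In (FAnd p q) (sub r) ->
  In p (sub r) /\ In q (sub r).
Proof.
  intros Hn H. pose proof (nodn_sub r _ H Hn) as [Hp Hq].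
  pose proof (sub_incl r _ H) as Hi. split; apply Hi; simpl; right; right;
    apply in_or_app; [left| right]; apply nodn_in; auto.
Qed.

Definition tp (phi : formula) (I : interp) (x : dom I) : cset :=
  fun C => con phi C /\ csat I C x.

Lemma tp_ct phi I x : concept_type phi (tp phi I x).
Proof.
  unfold tp; split; [|split].
  - intros D [H _]; auto.
  - intros D HD. pose proof (con_neg phi D HD). rewrite csat_cneg. tauto.
  - intros D E H. pose proof (con_andl _ _ _ H). pose proof (con_andr _ _ _ H).
    simpl. tauto.
Qed.

Lemma con_notex phi r C : con phi (CNot (CEx r C)) -> con phi (cneg C).
Proof.
  intro H. apply con_neg. apply (con_ex phi r). exact (con_neg _ _ H).
Qed.

Lemma qm_of_model phi I : fsat I phi ->
  quasimodel phi (fun c => exists x, c = tp phi I x) (fun a => tp phi I (iI I a))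
    (fun p => In p (Sub phi) /\ fsat I p).
Proof.
  intro Hphi. assert (Hnd : nodn (fnf phi)) by apply nodn_fnf.
  split; [split; [|split; [|split; [|split; [|split]]]]|split; [|split; [|split]]].
  - intros c [x ->]. apply tp_ct.
  - intros a _. eexists; reflexivity.
  - split; [|split].
    + tauto.
    + intros p Hp. pose proof (sub_fneg _ _ Hp). rewrite fsat_fneg. tauto.
    + intros p q H. unfold Sub in *. pose proof (sub_closed_and _ _ _ Hnd H).
      simpl. tauto.
  - split; [apply nodn_in; auto| apply fsat_fnf; auto].
  - intros C a [HS Hs]. split; [apply (con_ca phi C a HS)| exact Hs].
  - intros r a b [HS Hs] C [Hc Hn]. split; [apply (con_notex _ _ _ Hc)|].
    rewrite csat_cneg. intro HC. apply Hn. exists (iI I b). simpl in Hs. auto.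
  - intros c r D [x ->] [Hc [y [Hr HD]]].
    exists (tp phi I y). split; [eexists; reflexivity|]. split.
    + split; [apply (con_ex phi r); auto| auto].
    + intros E [HE Hn]. split; [apply (con_notex _ _ _ HE)|].
      rewrite csat_cneg. intro HC. apply Hn. exists y. auto.
  - intros c C [x ->] [_ Hs] [_ Ht]. rewrite csat_cneg in Hs. apply Hs. apply Ht.
  - intros C [_ Hs]. simpl in Hs. apply not_all_ex_not in Hs. destruct Hs as [x Hx].
    exists (tp phi I x). split; [eexists; reflexivity| unfold tp; tauto].
  - exists (tp phi I (dom_pt I)). eexists; reflexivity.
Qed.

Lemma key phi l I : formula_type phi (fun p => In p l) ->
  (forall p, In p l -> is_literal p = true -> fsat I p) ->
  forall p, nodn p -> incl (sub p) (Sub phi) -> (In p l <-> fsat I p).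
Proof.
  intros [_ [Hft2 Hft3]] Hlit.
  assert (Hat : forall p, is_atomic p = true -> In p (Sub phi) -> (In p l <-> fsat I p)).
  { intros p Ha Hp. split.
    - intro H. apply Hlit; auto. destruct p; simpl in *; auto; discriminate.
    - intro Hs. apply NNPP. intro Hn.
      assert (HN : In (FNot p) l).
      { apply NNPP. intro H2. apply Hn. apply (proj2 (Hft2 p Hp)).
        rewrite fneg_nn; auto. destruct p; simpl in *; auto; discriminate. }
      apply Hlit in HN; [simpl in HN; auto| simpl; auto]. }
  induction p; intros Hn Hi.
  - apply Hat; auto. apply Hi. simpl; auto.
  - apply Hat; auto. apply Hi. simpl; auto.
  - apply Hat; auto. apply Hi. simpl; auto.
  - destruct Hn as [Hnn Hn]. simpl in Hi. specialize (IHp Hn Hi).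
    assert (Hq : In p (Sub phi)) by (apply Hi; apply nodn_in; auto).
    pose proof (Hft2 p Hq) as H2. rewrite fneg_nn in H2; auto. simpl.
    split; intro H.
    + rewrite <- IHp. intro H'. apply H2 in H'. contradiction.
    + apply NNPP. intro H'. apply H. apply IHp. apply H2. auto.
  - destruct Hn as [Hn1 Hn2].
    assert (H1 : incl (sub p1) (Sub phi)).
    { intros y Hy. apply Hi. simpl. right; right. apply in_or_app; auto. }
    assert (H2 : incl (sub p2) (Sub phi)).
    { intros y Hy. apply Hi. simpl. right; right. apply in_or_app; auto. }
    assert (H0 : In (FAnd p1 p2) (Sub phi)) by (apply Hi; simpl; auto).
    rewrite (Hft3 _ _ H0). rewrite IHp1, IHp2; auto. simpl. tauto.
Qed.

Theorem mainTheorem3 : forall phi : formula, fequiv phi (dagger phi).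
Proof.
  intros phi I. unfold dagger. rewrite fsat_bigdisj. split.
  - intro H. set (l := pfilter (fsat I) (Sub phi)).
    exists (disjunct l). split.
    + apply in_map. unfold qm_ftypes. apply In_pfilter. split.
      * apply pfilter_subseqs.
      * exists (fun c => exists x, c = tp phi I x), (fun a => tp phi I (iI I a)).
        replace (fun p => In p l) with (fun p => In p (Sub phi) /\ fsat I p).
        -- apply qm_of_model; auto.
        -- apply functional_extensionality. intro p. apply propositional_extensionality.
           unfold l. rewrite In_pfilter. tauto.
    + unfold disjunct. apply fsat_bigconj. intros p Hp.
      apply filter_In in Hp. destruct Hp as [Hp _]. unfold l in Hp.
      apply In_pfilter in Hp. tauto.
  - intros [d [Hd Hs]]. apply in_map_iff in Hd. destruct Hd as [l [<- Hl]].
    unfold qm_ftypes in Hl. apply In_pfilter in Hl. destruct Hl as [_ [T [o Hq]]].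
    destruct Hq as [[_ [_ [Hft [Hphi _]]]] _].
    apply fsat_fnf.
    apply (key phi l I Hft).
    + intros p Hp Hlt. unfold disjunct in Hs. rewrite fsat_bigconj in Hs.
      apply Hs. apply filter_In. auto.
    + apply nodn_fnf.
    + apply incl_refl.
    + exact Hphi.
Qed.
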